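(* Let $N\ge1$, $R>0$, and for $i=1,\dots,N$ let $D_i>0$, $b_i>0$, $a_i\in\mathbb{R}$. Let $c_i(q):=-\dfrac{a_i}{b_i}-\dfrac{1}{b_i}\big[\ln(1-q)-\ln q\big]$ for $q\in(0,1)$, and for $\bm q\in(0,1)^N$ define $$g'(\bm q):=\sum_{i=1}^N\big(R D_i q_i c_i(q_i)-D_i q_i\big).$$ For $\lambda\in(0,\infty)$ define $$q_i(\lambda):=\frac{W\big(\exp(a_i+\frac{b_i}{\lambda R}+\frac{b_i}{R}-1)\big)}{W\big(\exp(a_i+\frac{b_i}{\lambda R}+\frac{b_i}{R}-1)\big)+1},\qquad g'(\lambda):=g'\big(q_1(\lambda),\dots,q_N(\lambda)\big).$$ Then $g'(\bm q)$ is strongly convex on $(0,1)^N$; $g'(\lambda)$ is strictly decreasing on $(0,\infty)$; and $\lim_{\lambda\to0^+}g'(\lambda)>0$.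
   Context: $W$ denotes the Lambert $W$ function on $(0,\infty)$: the inverse of $x\mapsto xe^x$ on $(0,\infty)$. $R$ is a lower bound on return on investment; $g'$ is the ROI-constraint function. *)

(* Defs.v *)
From HB Require Import structures.
From mathcomp Require Import all_boot all_order all_algebra.
From mathcomp Require Import all_classical all_reals all_analysis.
Set Implicit Arguments. Unset Strict Implicit. Unset Printing Implicit Defensive.
Import Order.TTheory GRing.Theory Num.Theory.
Import numFieldNormedType.Exports.
Local Open Scope classical_set_scope.
Local Open Scope ring_scope.

Definition lambertW {R : realType} (y : R) : R :=
  xget 0 [set x : R | 0 < x /\ x * expR x = y].

Definition cfun {R : realType} (a b q : R) : R :=
  - (a / b) - b^-1 * (ln (1 - q) - ln q).

Definition gq {R : realType} (N : nat) (Rr : R) (D b a : 'I_N -> R)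
  (q : 'I_N -> R) : R :=
  \sum_(i < N) (Rr * D i * q i * cfun (a i) (b i) (q i) - D i * q i).

Definition qlam {R : realType} (Rr a b lam : R) : R :=
  let w := lambertW (expR (a + b / (lam * Rr) + b / Rr - 1)) in w / (w + 1).

Definition glam {R : realType} (N : nat) (Rr : R) (D b a : 'I_N -> R)
  (lam : R) : R :=
  gq Rr D b a (fun i => qlam Rr (a i) (b i) lam).

Definition cube01 {R : realType} (N : nat) : set ('I_N -> R) :=
  [set q | forall i, 0 < q i < 1].

Definition strongly_convex_on {R : realType} (N : nat)
  (S : set ('I_N -> R)) (f : ('I_N -> R) -> R) : Prop :=
  exists m : R, 0 < m /\
    forall x y, S x -> S y -> forall t : R, 0 <= t <= 1 ->
      f (fun i => t * x i + (1 - t) * y i) <=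
      t * f x + (1 - t) * f y
      - m / 2 * t * (1 - t) * \sum_(i < N) (x i - y i) ^+ 2.

(* Main.v *)
Require Import Defs.
From HB Require Import structures.
From mathcomp Require Import all_boot all_order all_algebra.
From mathcomp Require Import all_classical all_reals all_analysis.
From mathcomp Require Import ring lra.
Set Implicit Arguments. Unset Strict Implicit. Unset Printing Implicit Defensive.
Import Order.TTheory GRing.Theory Num.Theory.
Import numFieldNormedType.Exports.
Local Open Scope classical_set_scope.
Local Open Scope ring_scope.

Section S.
Context {R : realType}.

Lemma ln_le_sub1 (z : R) : 0 < z -> ln z <= z - 1.
Proof.
move=> z0; have := @le_ln1Dx R (z - 1).
have -> : 1 + (z - 1) = z by ring.
apply; lra.
Qed.

Lemma xexp_lt (u v : R) : 0 <= u -> u < v -> u * expR u < v * expR v.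
Proof.
move=> u0 uv; apply: (@le_lt_trans _ _ (u * expR v)).
  by rewrite ler_wpM2l // ler_expR ltW.
by rewrite ltr_pM2r ?expR_gt0.
Qed.

Lemma lambertW_spec (y : R) : 0 < y ->
  0 < lambertW y /\ lambertW y * expR (lambertW y) = y.
Proof.
move=> y0; apply: (@xgetPex _ 0 [set x : R | 0 < x /\ x * expR x = y]).
have [] := @IVT R (fun x => x * expR x) 0 y y (ltW y0).
- move=> x; apply: continuous_subspaceT => z.
  apply: cvgM; [exact: cvg_id | exact: continuous_expR].
- rewrite mul0r; apply/andP; split.
    by rewrite ge_min (ltW y0).
  rewrite le_max; apply/orP; right.
  by rewrite ler_peMr ?ltW // expR_gt1.
move=> c; rewrite in_itv /= => /andP [c0 cy] ce.
exists c; split => //; rewrite lt_neqAle c0 andbT; apply/eqP => c0'.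
by move: ce; rewrite -c0' mul0r => /eqP; rewrite eq_sym gt_eqF.
Qed.

Lemma lambertW_uniq (w : R) : 0 < w -> lambertW (w * expR w) = w.
Proof.
move=> w0; have [h1 h2] := @lambertW_spec (w * expR w) (mulr_gt0 w0 (expR_gt0 w)).
set v := lambertW _ in h1 h2 *.
case: (ltgtP v w) => // vw.
  by have := xexp_lt (ltW h1) vw; rewrite h2 ltxx.
by have := xexp_lt (ltW w0) vw; rewrite h2 ltxx.
Qed.

Lemma lambertW_lt (y1 y2 : R) : 0 < y1 -> y1 < y2 -> lambertW y1 < lambertW y2.
Proof.
move=> y10 y12; have [a1 b1] := @lambertW_spec y1 y10.
have [a2 b2] := @lambertW_spec y2 (lt_trans y10 y12).
rewrite ltNge; apply/negP => h.
move: h; rewrite le_eqVlt => /orP [/eqP e|h].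
  by move: y12; rewrite -b1 -b2 e ltxx.
by have := xexp_lt (ltW a2) h; rewrite b1 b2 => /(lt_trans y12); rewrite ltxx.
Qed.
End S.

Section Conv.
Context {R : realType}.

Definition phi (q : R) := q * (ln q - ln (1 - q)).
Definition sl (x : R) := ln x - ln (1 - x) + (1 - x)^-1.

Lemma phi_tangent (x y : R) : 0 < x < 1 -> 0 < y < 1 ->
  phi x + sl x * (y - x) + (y - x) ^+ 2 / 4 <= phi y.
Proof.
move=> /andP [x0 x1] /andP [y0 y1].
set w := 1 - x; set v := 1 - y.
have w0 : 0 < w by rewrite /w subr_gt0.
have v0 : 0 < v by rewrite /v subr_gt0.
have w1 : w < 1 by rewrite /w; lra.
have v1 : v < 1 by rewrite /v; lra.
set u := v / w.
have u0 : 0 < u by rewrite divr_gt0.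
set s := Num.sqrt u.
have s0 : 0 < s by rewrite sqrtr_gt0.
have s2 : s ^+ 2 = u by rewrite sqr_sqrtr // ltW.
have hA : ln x - ln y <= x / y - 1.
  by rewrite -ln_div ?posrE // ln_le_sub1 // divr_gt0.
have hB : ln w - ln v <= w / v - 1.
  by rewrite -ln_div ?posrE // ln_le_sub1 // divr_gt0.
have hC : ln v - ln w <= 2 * (s - 1).
  rewrite -ln_div ?posrE // -/u -s2 lnXn // mulr2n.
  have := ln_le_sub1 s0; lra.
have hA' : y * (ln x - ln y) <= x - y.
  have := ler_wpM2l (ltW y0) hA.
  have -> : y * (x / y - 1) = x - y by field; rewrite gt_eqF.
  done.
have hB' : v * (ln w - ln v) <= y - x.
  have := ler_wpM2l (ltW v0) hB.
  have -> : v * (w / v - 1) = y - x by rewrite /v /w; field; rewrite -/v gt_eqF.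
  done.
have vws : v = w * s ^+ 2 by rewrite s2 /u mulrC divfK // gt_eqF.
have ws1 : w * s <= 1.
  have e : (w * s) ^+ 2 = w * v by rewrite vws; ring.
  have : w * v < 1 by nra.
  rewrite -e => h; nra.
have key : 0 <= (1 - s) ^+ 2 * (4 - (w * (1 + s)) ^+ 2).
  apply: mulr_ge0; first by rewrite sqr_ge0.
  have : 0 <= w * (1 + s) <= 2 by apply/andP; split; nra.
  move=> /andP [h1 h2]; nra.
have r1 : (y - x) * (1 - x)^-1 = 1 - s ^+ 2.
  rewrite -/w; have -> : y - x = w - v by rewrite /w /v; ring.
  by rewrite vws; field; rewrite gt_eqF.
have r2 : (y - x) ^+ 2 = w ^+ 2 * (1 - s ^+ 2) ^+ 2.
  have -> : y - x = w - v by rewrite /w /v; ring.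
  by rewrite vws; ring.
have key' : w ^+ 2 * (1 - s ^+ 2) ^+ 2 / 4 <= (1 - s) ^+ 2.
  have -> : w ^+ 2 * (1 - s ^+ 2) ^+ 2 = (1 - s) ^+ 2 * (w * (1 + s)) ^+ 2 by ring.
  lra.
have hB'' : (1 - y) * (ln w - ln v) <= y - x by [].
rewrite /phi /sl -/w -/v r2.
rewrite -/w in r1.
move: hA' hB'' hC r1 key'; clearbody w v u s; move=> hA' hB'' hC r1 key'.
lra.
Qed.

End Conv.

Section Conv2.
Context {R : realType}.

Definition Tf (Rr D a b q : R) := Rr * D * q * cfun a b q - D * q.

Lemma Tf_phi (Rr D a b q : R) :
  Tf Rr D a b q = (Rr * D / b) * phi q + (- (Rr * D * a / b) - D) * q.
Proof. by rewrite /Tf /cfun /phi; ring. Qed.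

Lemma phi_conv (x y t : R) : 0 < x < 1 -> 0 < y < 1 -> 0 <= t <= 1 ->
  phi (t * x + (1 - t) * y) <=
  t * phi x + (1 - t) * phi y - t * (1 - t) * (x - y) ^+ 2 / 4.
Proof.
move=> hx hy /andP [t0 t1].
have hz : 0 < t * x + (1 - t) * y < 1.
  case/andP: hx => ? ?; case/andP: hy => ? ?.
  have t1' : 0 <= 1 - t by lra.
  case: (lerP y x) => hxy.
    have d : 0 <= x - y by lra.
    have := mulr_ge0 t0 d; have := mulr_ge0 t1' d.
    move=> ? ?; apply/andP; split; nra.
  have d : 0 <= y - x by lra.
  have := mulr_ge0 t0 d; have := mulr_ge0 t1' d.
  move=> ? ?; apply/andP; split; nra.
have h1 := phi_tangent hz hx.
have h2 := phi_tangent hz hy.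
have h1' := ler_wpM2l t0 h1.
have t1' : 0 <= 1 - t by lra.
have h2' := ler_wpM2l t1' h2.
move: h1' h2'.
set P := phi _; set S := sl _.
move=> h1' h2'.
have e : t * (P + S * (x - (t * x + (1 - t) * y)) + (x - (t * x + (1 - t) * y)) ^+ 2 / 4)
  + (1 - t) * (P + S * (y - (t * x + (1 - t) * y)) + (y - (t * x + (1 - t) * y)) ^+ 2 / 4)
  = P + t * (1 - t) * (x - y) ^+ 2 / 4 by ring.
lra.
Qed.

Lemma Tf_conv (Rr D a b x y t : R) : 0 < Rr * D / b ->
  0 < x < 1 -> 0 < y < 1 -> 0 <= t <= 1 ->
  Tf Rr D a b (t * x + (1 - t) * y) <=
  t * Tf Rr D a b x + (1 - t) * Tf Rr D a b y
  - (Rr * D / b) / 4 * t * (1 - t) * (x - y) ^+ 2.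
Proof.
move=> K0 hx hy ht; rewrite !Tf_phi.
have := ler_wpM2l (ltW K0) (phi_conv hx hy ht).
set K := Rr * D / b; set L := - _ - D.
move=> h.
have e : K * (t * phi x + (1 - t) * phi y - t * (1 - t) * (x - y) ^+ 2 / 4)
  = t * (K * phi x) + (1 - t) * (K * phi y) - K / 4 * t * (1 - t) * (x - y) ^+ 2 by ring.
lra.
Qed.

End Conv2.

Section Lam.
Context {R : realType}.

Definition xl (Rr a b lam : R) := a + b / (lam * Rr) + b / Rr - 1.

Lemma ln_W (x : R) : ln (lambertW (expR x)) = x - lambertW (expR x).
Proof.
have [h1 h2] := @lambertW_spec R (expR x) (expR_gt0 x).
set w := lambertW _ in h1 h2 *.
have : ln (w * expR w) = ln (expR x) by rewrite h2.
rewrite lnM ?posrE ?expR_gt0 // !expRK => h; rewrite -h; ring.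
Qed.

Lemma Tf_W (Rr D a b w : R) : 0 < w ->
  Tf Rr D a b (w / (w + 1)) = w / (w + 1) * (Rr * D / b * (ln w - a) - D).
Proof.
move=> w0; have w1 : 0 < w + 1 by lra.
rewrite /Tf /cfun.
have -> : 1 - w / (w + 1) = (w + 1)^-1 by field; rewrite gt_eqF.
rewrite lnV ?posrE // ln_div ?posrE //; ring.
Qed.

Lemma F_mono (K D a l2 w1 w2 : R) : 0 < K -> 0 < D -> 0 < l2 ->
  0 < w2 -> w2 < w1 ->
  K * (ln w2 + w2 + 1 - a) - D = D / l2 ->
  w2 / (w2 + 1) * (K * (ln w2 - a) - D) < w1 / (w1 + 1) * (K * (ln w1 - a) - D).
Proof.
move=> K0 D0 l0 w20 w21 hrel.
have w10 : 0 < w1 by lra.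
have p0 : 0 < w1 + 1 by lra.
have r0 : 0 < w2 + 1 by lra.
have hL : w1 - w2 <= w1 * (ln w1 - ln w2).
  have := ln_le_sub1 (divr_gt0 w20 w10).
  rewrite ln_div ?posrE // => h.
  have := ler_wpM2l (ltW w10) h.
  have -> : w1 * (w2 / w1 - 1) = w2 - w1 by field; rewrite gt_eqF.
  lra.
set L1 := ln w1 in hL *; set L2 := ln w2 in hL hrel *.
have e : w1 / (w1 + 1) * (K * (L1 - a) - D) - w2 / (w2 + 1) * (K * (L2 - a) - D)
  = (w1 - w2) / ((w1 + 1) * (w2 + 1)) * (K * (L2 + w2 + 1 - a) - D)
    + K / (w1 + 1) * (w1 * (L1 - L2) - (w1 - w2)).
  by field; rewrite ?gt_eqF.
rewrite hrel in e.
have g1 : 0 < (w1 - w2) / ((w1 + 1) * (w2 + 1)) * (D / l2).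
  apply: mulr_gt0; apply: divr_gt0 => //; try lra; exact: mulr_gt0.
have g2 : 0 <= K / (w1 + 1) * (w1 * (L1 - L2) - (w1 - w2)).
  apply: mulr_ge0; [apply: ltW; exact: divr_gt0| lra].
lra.
Qed.

Lemma qlamE (Rr a b lam : R) :
  qlam Rr a b lam = lambertW (expR (xl Rr a b lam)) / (lambertW (expR (xl Rr a b lam)) + 1).
Proof. by []. Qed.

Lemma term_lt (Rr D a b l1 l2 : R) : 0 < Rr -> 0 < D -> 0 < b ->
  0 < l1 -> l1 < l2 ->
  Tf Rr D a b (qlam Rr a b l2) < Tf Rr D a b (qlam Rr a b l1).
Proof.
move=> R0 D0 b0 l10 l12.
have l20 : 0 < l2 by lra.
rewrite !qlamE.
have hx : xl Rr a b l2 < xl Rr a b l1.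
  rewrite /xl; suff : b / (l2 * Rr) < b / (l1 * Rr) by lra.
  rewrite ltr_pM2l // ltf_pV2 ?posrE ?mulr_gt0 //.
  by rewrite ltr_pM2r.
have hw := lambertW_lt (expR_gt0 _) (_ : expR (xl Rr a b l2) < expR (xl Rr a b l1)).
rewrite ltr_expR in hw; move: (hw hx) => {}hw.
have [w20 _] := @lambertW_spec R _ (expR_gt0 (xl Rr a b l2)).
rewrite !Tf_W //; last by lra.
apply: (F_mono (l2:=l2)) => //; first by apply: divr_gt0 => //; apply: mulr_gt0.
rewrite ln_W /xl; field; rewrite ?gt_eqF //.
Qed.

Lemma term_le (Rr D a b l1 l2 : R) : 0 < Rr -> 0 < D -> 0 < b ->
  0 < l1 -> l1 <= l2 ->
  Tf Rr D a b (qlam Rr a b l2) <= Tf Rr D a b (qlam Rr a b l1).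
Proof.
move=> R0 D0 b0 l10; rewrite le_eqVlt => /orP [/eqP -> //|h].
exact/ltW/term_lt.
Qed.

Lemma term_pos (Rr D a b : R) : 0 < Rr -> 0 < D -> 0 < b ->
  exists2 l0, 0 < l0 & 0 < Tf Rr D a b (qlam Rr a b l0).
Proof.
move=> R0 D0 b0.
set c := a + b / Rr + 1; set w0 := expR c.
have w00 : 0 < w0 by exact: expR_gt0.
exists (b / (Rr * (w0 + 2))).
  by apply: divr_gt0 => //; apply: mulr_gt0 => //; lra.
have hx : xl Rr a b (b / (Rr * (w0 + 2))) = c + w0.
  rewrite /xl /c; field; rewrite ?gt_eqF //; try lra.
rewrite qlamE hx expRD -/w0 lambertW_uniq // Tf_W //.
rewrite /w0 expRK /c.
have -> : Rr * D / b * (a + b / Rr + 1 - a) - D = Rr * D / b by field; rewrite ?gt_eqF.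
apply: mulr_gt0; first by apply: divr_gt0 => //; lra.
by apply: divr_gt0 => //; apply: mulr_gt0.
Qed.

End Lam.

Lemma sum_lt_helper {R : realType} (N : nat) (F G : 'I_N -> R) : (0 < N)%N ->
  (forall i, F i < G i) -> \sum_(i < N) F i < \sum_(i < N) G i.
Proof.
move=> hN h; apply: ltr_sum => //.
by apply/hasP; exists (Ordinal hN); rewrite ?mem_index_enum.
Qed.

Theorem theorem5 (R : realType) (N : nat) (Rr : R) (D b a : 'I_N -> R) :
  (0 < N)%N -> 0 < Rr ->
  (forall i, 0 < D i) -> (forall i, 0 < b i) ->
  [/\ strongly_convex_on (@cube01 R N) (gq Rr D b a),
      (forall l1 l2 : R, 0 < l1 -> l1 < l2 -> glam Rr D b a l2 < glam Rr D b a l1)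
    & exists l : \bar R,
        ((glam Rr D b a x)%:E @[x --> 0^'+] --> l) /\ (0 < l)%E ].
Proof.
move=> hN R0 D0 b0.
have K0 : forall i, 0 < Rr * D i / b i.
  by move=> i; apply: divr_gt0 => //; apply: mulr_gt0.
have gdec : forall l1 l2 : R, 0 < l1 -> l1 < l2 -> glam Rr D b a l2 < glam Rr D b a l1.
  move=> l1 l2 l10 l12; rewrite /glam /gq.
  apply: sum_lt_helper => // i.
  exact: (@term_lt R Rr (D i) (a i) (b i) l1 l2 R0 (D0 i) (b0 i) l10 l12).
split => //.
- set S := 1 + \sum_(i < N) (Rr * D i / b i)^-1.
  have S0 : 0 < S.
    rewrite /S; have : 0 <= \sum_(i < N) (Rr * D i / b i)^-1.
      by apply: sumr_ge0 => i _; rewrite invr_ge0 ltW.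
    lra.
  have KS : forall i, (2 * S)^-1 / 2 <= Rr * D i / b i / 4.
    move=> i.
    have hi : (Rr * D i / b i)^-1 <= S.
      rewrite /S (bigD1 i) //=.
      have : 0 <= \sum_(j < N | j != i) (Rr * D j / b j)^-1.
        by apply: sumr_ge0 => j _; rewrite invr_ge0 ltW.
      lra.
    have hKS : 1 <= Rr * D i / b i * S.
      have := ler_wpM2l (ltW (K0 i)) hi.
      by rewrite mulfV ?gt_eqF.
    have -> : (2 * S)^-1 / 2 = Rr * D i / b i / 4 - (Rr * D i / b i * S - 1) / (4 * S).
      by field; rewrite !gt_eqF.
    have : 0 <= (Rr * D i / b i * S - 1) / (4 * S).
      apply: divr_ge0; first lra.
      by apply: mulr_ge0 => //; exact: ltW.
    lra.
  exists (2 * S)^-1; split; first by rewrite invr_gt0 mulr_gt0.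
  move=> x y Sx Sy t ht.
  rewrite /gq !mulr_sumr -big_split -sumrB /=.
  apply: ler_sum => i _.
  apply: le_trans.
    exact: (@Tf_conv R Rr (D i) (a i) (b i) (x i) (y i) t (K0 i) (Sx i) (Sy i) ht).
  have htt : 0 <= t * (1 - t) * (x i - y i) ^+ 2.
    case/andP: ht => ? ?; apply: mulr_ge0; last exact: sqr_ge0.
    apply: mulr_ge0 => //; lra.
  have := ler_wpM2r htt (KS i).
  rewrite /Tf; lra.
- have [lf hlf] : exists lf : 'I_N -> R,
      forall i, 0 < lf i /\ 0 < Tf Rr (D i) (a i) (b i) (qlam Rr (a i) (b i) (lf i)).
    have hc : forall i : 'I_N, exists l0 : R,
        0 < l0 /\ 0 < Tf Rr (D i) (a i) (b i) (qlam Rr (a i) (b i) l0).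
      move=> i; have [l0 h1 h2] := term_pos (a i) R0 (D0 i) (b0 i).
      by exists l0.
    have [f hf] := boolp.choice hc.
    by exists f.
  set ls := (1 + \sum_(i < N) (lf i)^-1)^-1.
  have Sp : 0 < 1 + \sum_(i < N) (lf i)^-1.
    have : 0 <= \sum_(i < N) (lf i)^-1.
      by apply: sumr_ge0 => i _; rewrite invr_ge0 ltW //; case: (hlf i).
    lra.
  have ls0 : 0 < ls by rewrite invr_gt0.
  have lsle : forall i, ls <= lf i.
    move=> i; have [li0 _] := hlf i.
    rewrite /ls -(invrK (lf i)) lef_pV2 ?posrE ?invr_gt0 //.
    rewrite (bigD1 i) //=.
    have : 0 <= \sum_(j < N | j != i) (lf j)^-1.
      by apply: sumr_ge0 => j _; rewrite invr_ge0 ltW //; case: (hlf j).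
    lra.
  have gpos : 0 < glam Rr D b a ls.
    rewrite /glam /gq.
    have := @sum_lt_helper R N (fun _ => 0)
      (fun i => Tf Rr (D i) (a i) (b i) (qlam Rr (a i) (b i) ls)) hN.
    rewrite big1 // => H; apply: H => i.
    have [li0 lip] := hlf i.
    apply: (lt_le_trans lip).
    exact: (@term_le R Rr (D i) (a i) (b i) ls (lf i) R0 (D0 i) (b0 i) ls0 (lsle i)).
  eexists; split.
    apply: (@nonincreasing_at_right_cvge _ (fun x => (glam Rr D b a x)%:E) 0 (BInfty _ false)).
      by [].
    move=> x y; rewrite !in_itv /= !andbT => x0 y0 xy.
    rewrite lee_fin.
    rewrite le_eqVlt in xy; case/orP: xy => [/eqP -> //|xy].
    exact/ltW/gdec.
  apply: (lt_le_trans (_ : 0 < (glam Rr D b a ls)%:E)%E).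
    by rewrite lte_fin.
  apply: ereal_sup_ubound; exists ls => //.
  by rewrite /= in_itv /= andbT.
Qed.
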